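(* Let $S\subset[m]$ with $\Lambda_S\neq\emptyset$. Then for every $v\in\Lambda_S$, $$\Lambda_S=\Delta_S\cap(v+K)=\{v+w\in\Delta_S: w\in K\}.$$ Consequently $\Lambda$ is contained in a finite union of translates of $K$.
   Context: $H=(V,E)$ is a finite hypergraph with $V=[m]$, $|E|=N\ge1$, hyperedges nonempty subsets of $[m]$, each vertex in at least one hyperedge. For $v\in\mathbb R^m$ and $I\in E$, $v_I=\sum_{i\in I}v_i$. $\Gamma=\{x\in\mathbb R^m:\sum_ix_i=0\}$; $I(H)$ is the $N\times m$ incidence matrix with entry $(I,i)$ equal to $1$ if $i\in I$, else $0$; $K=\ker(I(H)|_\Gamma)=\{w\in\Gamma: w_I=0\ \forall I\in E\}$. Fix $0<c<1/N$ and let $\Delta=\{x\in\mathbb R^m: x_i\ge0,\ \sum_i x_i=1,\ x_I\ge c\ \forall I\in E\}$. $L:\Delta\to\mathbb R$, $L(v)=-\sum_i v_i+\frac1N\sum_{I\in E}\log v_I$; $F_i(v)=v_i\frac{\partial L}{\partial v_i}(v)$ and $\Lambda=\{v\in\Delta:F(v)=0\}$. For $S\subset[m]$, the face $\Delta_S=\{v\in\Delta: v_i=0\iff i\notin S\}$, and $\Lambda_S=\{v\in\Delta_S:\frac{\partial L}{\partial v_i}(v)=0\ \forall i\in S\}$ (the $S$-singularities); $\Lambda=\bigcup_{S}\Lambda_S$. *)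

(* Defs.v *)
From HB Require Import structures.
From mathcomp Require Import all_boot all_order all_algebra.
From mathcomp Require Import all_classical all_reals all_analysis.
Set Implicit Arguments. Unset Strict Implicit. Unset Printing Implicit Defensive.
Import Order.TTheory GRing.Theory Num.Theory.
Local Open Scope ring_scope.

Section Defs.
Variables (R : realType) (m : nat) (E : {set {set 'I_m}}) (c : R).

Definition vsum (v : 'I_m -> R) (I : {set 'I_m}) : R := \sum_(i in I) v i.

Definition inGamma (x : 'I_m -> R) : Prop := \sum_i x i = 0.

(* K = ker (I(H) restricted to Gamma) *)
Definition inK (w : 'I_m -> R) : Prop :=
  inGamma w /\ forall I, I \in E -> vsum w I = 0.

Definition inDelta (x : 'I_m -> R) : Prop :=
  (forall i, 0 <= x i) /\ \sum_i x i = 1 /\ (forall I, I \in E -> c <= vsum x I).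

Definition inDeltaS (S : {set 'I_m}) (x : 'I_m -> R) : Prop :=
  inDelta x /\ forall i, x i = 0 <-> i \notin S.

Definition Lfun (v : 'I_m -> R) : R :=
  - \sum_i v i + (#|E|%:R)^-1 * \sum_(I in E) ln (vsum v I).

Definition dL (i : 'I_m) (v : 'I_m -> R) : R :=
  derive1 (fun t : R => Lfun (fun j => v j + t * (j == i)%:R)) 0.

Definition Ffun (v : 'I_m -> R) (i : 'I_m) : R := v i * dL i v.

Definition inLambda (v : 'I_m -> R) : Prop :=
  inDelta v /\ forall i, Ffun v i = 0.

Definition inLambdaS (S : {set 'I_m}) (v : 'I_m -> R) : Prop :=
  inDeltaS S v /\ forall i, i \in S -> dL i v = 0.

End Defs.

(* Main.v *)
Require Import Defs.
From HB Require Import structures.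
From mathcomp Require Import all_boot all_order all_algebra.
From mathcomp Require Import all_classical all_reals all_analysis.
From mathcomp Require Import ring lra.
Import Order.TTheory GRing.Theory Num.Theory.
Local Open Scope ring_scope.

Section H.
Variable R : realType.

Lemma is_derive_lnaff (a b : R) : 0 < a ->
  is_derive (0:R) (1:R) (fun t => ln (a + t * b)) (b / a).
Proof.
move=> a0.
have hf : is_derive (0:R) (1:R) (fun t : R => a + t * b) b.
  rewrite (_ : (fun t : R => a + t * b) = cst a + b *: (@id R)).
    have h1 : is_derive (0:R) (1:R) (b *: (@id R)) (b *: (1:R)).
      by apply: is_deriveZ; exact: is_derive_id.
    have := @is_deriveD R R R (cst a) (b *: (@id R)) 0 1 0 (b *: (1:R)) (is_derive_cst _ _ _) h1.
    by move=> h; apply: is_derive_eq h _; rewrite add0r; exact: mulr1.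
  by apply: funext => t; rewrite /= mulrC.
have hg : is_derive (a + 0 * b) (1:R) (@ln R) (a + 0 * b)^-1.
  by apply: is_derive1_ln; rewrite mul0r addr0.
have dc : derivable ((@ln R) \o (fun t : R => a + t * b)) 0 1.
  apply/derivable1_diffP; apply: differentiable_comp.
    by apply/derivable1_diffP; case: hf.
  by apply/derivable1_diffP; case: hg.
apply: DeriveDef; first exact: dc.
rewrite -derive1E derive1_comp; last 2 first.
- by case: hf.
- by case: hg.
rewrite !derive1E !derive_val mul0r addr0 mulrC.
done.
Qed.

Lemma is_derive_bigsum (T : Type) (s : seq T) (P : pred T) (h : T -> R -> R) (dh : T -> R) :
  (forall I, P I -> is_derive (0:R) (1:R) (h I) (dh I)) ->
  is_derive (0:R) (1:R) (fun t => \sum_(I <- s | P I) h I t) (\sum_(I <- s | P I) dh I).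
Proof.
move=> H; elim: s => [|a s IH].
  rewrite big_nil (_ : (fun t => _) = cst 0); first exact: is_derive_cst.
  by apply: funext => t; rewrite big_nil.
rewrite big_cons; case: ifP => Pa.
  rewrite (_ : (fun t => _) = h a + (fun t => \sum_(I <- s | P I) h I t)).
    exact: is_deriveD (H a Pa) IH.
  by apply: funext => t; rewrite big_cons Pa.
rewrite (_ : (fun t => _) = (fun t => \sum_(I <- s | P I) h I t)) //.
by apply: funext => t; rewrite big_cons Pa.
Qed.

Lemma is_derive_affcomb (A k : R) (G : R -> R) dG : is_derive (0:R) (1:R) G dG ->
  is_derive (0:R) (1:R) (fun t => A - t + k * G t) (-1 + k * dG).
Proof.
move=> hG.
rewrite (_ : (fun t => _) = cst A + ((-1) *: (@id R) + k *: G)); last first.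
  apply: funext => t; by rewrite /= addrA !fctE /= scaleN1r.
have h1 : is_derive (0:R) (1:R) ((-1) *: (@id R)) ((-1) *: (1:R)).
  by apply: is_deriveZ; exact: is_derive_id.
have h2 : is_derive (0:R) (1:R) (k *: G) (k *: dG) by apply: is_deriveZ.
have h3 := is_deriveD h1 h2.
have := is_deriveD (is_derive_cst A (0:R) (1:R)) h3.
by move=> h; apply: is_derive_eq h _; rewrite add0r scaleN1r.
Qed.

Lemma vsum_shift (m : nat) (v : 'I_m -> R) (i : 'I_m) (t : R) (I : {set 'I_m}) :
  vsum (fun j => v j + t * (j == i)%:R) I = vsum v I + t * (i \in I)%:R.
Proof.
rewrite /vsum big_split /=; congr (_ + _).
rewrite -big_distrr /=; congr (_ * _).
case: (boolP (i \in I)) => iI.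
  rewrite (bigD1 i) //= eqxx big1 ?addr0 // => j /andP[_ /negbTE ->] //.
by rewrite big1 // => j jI; case: eqP => // ji; move: jI; rewrite ji (negbTE iI).
Qed.

Lemma dL_formula (m : nat) (E : {set {set 'I_m}}) (v : 'I_m -> R) (i : 'I_m) :
  (forall I, I \in E -> 0 < vsum v I) ->
  dL E i v = -1 + (#|E|%:R)^-1 * \sum_(I in E) ((i \in I)%:R / vsum v I).
Proof.
move=> pos.
rewrite /dL (_ : (fun t => _) = (fun t => - \sum_j v j - t + (#|E|%:R)^-1 *
   \sum_(I in E) ln (vsum v I + t * (i \in I)%:R))); last first.
  apply: funext => t; rewrite /Lfun; congr (_ + _).
    rewrite big_split /= opprD; congr (_ - _).
    rewrite (bigD1 i) //= eqxx mulr1 big1 ?addr0 // => j /negbTE ->.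
    by rewrite mulr0.
  by congr (_ * _); apply: eq_bigr => I _; rewrite vsum_shift.
rewrite derive1E; apply: derive_val; apply: is_derive_affcomb.
apply: is_derive_bigsum => I IE; exact: is_derive_lnaff (pos I IE).
Qed.

Lemma delta_pos (m : nat) (E : {set {set 'I_m}}) (c : R) v :
  0 < c -> inDelta E c v -> forall I, I \in E -> 0 < vsum v I.
Proof. by move=> c0 [_ [_ h]] I IE; apply: lt_le_trans c0 (h I IE). Qed.

Lemma part1_fwd (m : nat) (E : {set {set 'I_m}}) (c : R) S v x :
  (0 < #|E|)%N -> 0 < c -> inLambdaS E c S v -> inLambdaS E c S x ->
  forall I, I \in E -> vsum x I = vsum v I.
Proof.
move=> E0 c0 [[dv sv] cv] [[dx sx] cx].
have pv := @delta_pos m E c v c0 dv; have px := @delta_pos m E c x c0 dx.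
pose g (y : 'I_m -> R) i := \sum_(I in E) ((i \in I)%:R / vsum y I).
have N0 : (#|E|%:R : R)^-1 != 0 by rewrite invr_eq0 pnatr_eq0 -lt0n.
have hg : forall i, (x i - v i) * (g x i - g v i) = 0.
  move=> i; case: (boolP (i \in S)) => iS.
    have := cv i iS; have := cx i iS.
    rewrite !dL_formula // => hx hv.
    have : (#|E|%:R : R)^-1 * g x i = (#|E|%:R)^-1 * g v i.
      by apply: (@addrI _ (-1)); rewrite /g hx hv.
    by move/(mulfI N0) ->; rewrite subrr mulr0.
  by rewrite (proj2 (sx i) iS) (proj2 (sv i) iS) subrr mul0r.
pose d I := (vsum x I - vsum v I) * ((vsum x I)^-1 - (vsum v I)^-1).
have sd : \sum_(I in E) d I = 0.
  have h0 : \sum_i (x i - v i) * (g x i - g v i) = 0 by apply: big1 => i _; exact: hg.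
  apply: (etrans _ h0).
  have e1 : forall i, g x i - g v i =
      \sum_(I in E) (i \in I)%:R * ((vsum x I)^-1 - (vsum v I)^-1).
    move=> i; rewrite /g -sumrB; apply: eq_bigr => I _; by rewrite mulrBr.
  under [RHS]eq_bigr => i _ do rewrite e1 big_distrr /=.
  rewrite exchange_big /=; apply: eq_bigr => I IE.
  under eq_bigr do rewrite mulrA.
  rewrite /d -big_distrl /=; congr (_ * _).
  rewrite /vsum -sumrB big_mkcond /=; apply: eq_bigr => i _.
  by case: (i \in I); rewrite ?mulr1 ?mulr0.
have dE : forall I, I \in E -> d I = - ((vsum x I - vsum v I) ^+ 2 / (vsum x I * vsum v I)).
  move=> I IE; rewrite /d; have := px I IE; have := pv I IE.
  move=> a b; field; apply/andP; split; by rewrite gt_eqF.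
have sd' : \sum_(I in E) ((vsum x I - vsum v I) ^+ 2 / (vsum x I * vsum v I)) = 0.
  apply/eqP; rewrite -oppr_eq0 -sumrN; apply/eqP; rewrite -[RHS]sd.
  by apply: eq_bigr => I IE; rewrite dE.
move=> I IE.
have nn : forall J, J \in E -> 0 <= (vsum x J - vsum v J) ^+ 2 / (vsum x J * vsum v J).
  move=> J JE; apply: divr_ge0; first exact: sqr_ge0.
  by apply: mulr_ge0; apply: ltW; [apply: px | apply: pv].
have h := psumr_eq0P nn sd' IE.
move/eqP: h; rewrite mulf_eq0 invr_eq0 (gt_eqF (mulr_gt0 (px I IE) (pv I IE))) orbF.
by rewrite expf_eq0 /= subr_eq0 => /eqP.
Qed.
End H.

Theorem lemma3p1 (R : realType) (m : nat) (E : {set {set 'I_m}}) (c : R) :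
  (0 < #|E|)%N ->
  (forall I, I \in E -> I != finset.set0) ->
  (forall i : 'I_m, exists I, I \in E /\ i \in I) ->
  0 < c -> c < (#|E|%:R)^-1 ->
  (forall S : {set 'I_m}, (exists v, inLambdaS E c S v) ->
     forall v, inLambdaS E c S v ->
     forall x, inLambdaS E c S x <->
               (inDeltaS E c S x /\ exists w, inK E w /\ x = (fun j => v j + w j)))
  /\
  (exists vS : {set 'I_m} -> ('I_m -> R),
     forall x, inLambda E c x ->
       exists S : {set 'I_m}, exists w, inK E w /\ x = (fun j => vS S j + w j)).
Proof.
move=> E0 Ene Ecov c0 cN.
have P1 : forall S, (exists v, inLambdaS E c S v) -> forall v, inLambdaS E c S v ->
    forall x, inLambdaS E c S x <->
      (inDeltaS E c S x /\ exists w, inK E w /\ x = (fun j => v j + w j)).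
  move=> S _ v hv x; split.
  - move=> hx; split; first by case: hx.
    exists (fun j => x j - v j); split; last by apply: funext => j; rewrite addrC subrK.
    split.
      rewrite /inGamma sumrB.
      case: hx => [[[_ [-> _]] _] _]; case: hv => [[[_ [-> _]] _] _].
      by rewrite subrr.
    move=> I IE; rewrite /vsum sumrB -/(vsum x I) -/(vsum v I).
    by rewrite (@part1_fwd R m E c S v x E0 c0 hv hx I IE) subrr.
  - case=> hx [w [[_ wK] xe]]; split; first by [].
    have ev : forall I, I \in E -> vsum x I = vsum v I.
      move=> I IE; rewrite xe /vsum big_split /=.
      by have := wK I IE; rewrite /vsum => ->; rewrite addr0.
    have pv := @delta_pos R m E c v c0 hv.1.1.
    move=> i iS; rewrite dL_formula; last by move=> I IE; rewrite ev //; exact: pv.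
    have := hv.2 i iS; rewrite dL_formula // => h0; apply: (etrans _ h0).
    by congr (_ + _ * _); apply: eq_bigr => I IE; rewrite ev.
split; first exact: P1.
pose vS := fun S => match pselect (exists v, inLambdaS E c S v) with
  | left h => proj1_sig (cid h) | right _ => (fun _ : 'I_m => (0:R)) end.
exists vS => x [dx Fx].
pose S := [set i | x i != 0].
have hx : inLambdaS E c S x.
  split; first split => //.
    move=> i; rewrite inE negbK; split => [->|/eqP] //.
  move=> i; rewrite inE => xi; have := Fx i; rewrite /Ffun => /eqP.
  by rewrite mulf_eq0 (negbTE xi) /= => /eqP.
have ex : exists v, inLambdaS E c S v by exists x.
have hv : inLambdaS E c S (vS S).
  by rewrite /vS; case: pselect => [h|//]; exact: proj2_sig (cid h).
have [_ [w [wK xe]]] := (P1 S ex (vS S) hv x).1 hx.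
by exists S, w.
Qed.
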